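(* For any $p\in(0,1)$, under the Alternating Path Randomized Design with parameter $p$, the Horvitz–Thompson estimator $\hat\tau_{\mathrm{AP}}$ is unbiased for the average treatment effect: $\mathbb{E}[\hat\tau_{\mathrm{AP}}]=\tau$.
   Context: Setting: $2N$ agents; $\mathbb{M}^t,\mathbb{M}^c$ are one-to-one matchings (sets of unordered pairs of distinct agents, each agent in at most one pair). Each pair $(a,b)$ has a fixed real potential outcome $Y_{a,b}$ (non-random; randomness comes only from the design). Estimand: $\tau=\frac1N\big(\sum_{(a,b)\in\mathbb{M}^t}Y_{a,b}-\sum_{(a,b)\in\mathbb{M}^c}Y_{a,b}\big)$. The disagreement set $\triangle\mathbb{M}^{(t,c)}=(\mathbb{M}^t\cup\mathbb{M}^c)\setminus(\mathbb{M}^t\cap\mathbb{M}^c)$, viewed as a graph, has connected components $\mathcal{P}_1,\dots,\mathcal{P}_m$, each an alternating path or cycle: a sequence $(v_{i,1},\dots,v_{i,k(i)+1})$ whose consecutive pairs $e_{i,j}=(v_{i,j},v_{i,j+1})$, $j=1,\dots,k(i)$, are the component's edges, alternating between $\triangle\mathbb{M}^{(t,c)}_t=\triangle\mathbb{M}^{(t,c)}\cap\mathbb{M}^t$ and $\triangle\mathbb{M}^{(t,c)}_c=\triangle\mathbb{M}^{(t,c)}\cap\mathbb{M}^c$; it is a cycle if $v_{i,1}=v_{i,k(i)+1}$, a path otherwise. Alternating Path Randomized Design with parameter $p$: indicators $W_{i,j}\in\{0,1\}$, independent across components; within $\mathcal{P}_i$, $\mathbb{P}(W_{i,1}=1)=p/(1+p)$;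 for $2\le j\le k(i)$ (path) or $2\le j\le k(i)-1$ (cycle), conditionally on $W_{i,1},\dots,W_{i,j-1}$, $W_{i,j}=1$ with probability $p$ if $W_{i,j-1}=0$ and $W_{i,j}=0$ if $W_{i,j-1}=1$; for a cycle, $W_{i,k(i)}=1$ iff $W_{i,1}=W_{i,k(i)-1}=0$. Horvitz–Thompson estimator: \[\hat\tau_{\mathrm{AP}}=\frac1N\sum_{i=1}^m\Big(\sum_{j:\,e_{i,j}\in\triangle\mathbb{M}^{(t,c)}_t}\frac{W_{i,j}Y_{e_{i,j}}}{\mathbb{P}(W_{i,j}=1)}-\sum_{j:\,e_{i,j}\in\triangle\mathbb{M}^{(t,c)}_c}\frac{W_{i,j}Y_{e_{i,j}}}{\mathbb{P}(W_{i,j}=1)}\Big).\] *)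

(* Defs.v *)
From HB Require Import structures.
From mathcomp Require Import all_boot all_order all_algebra.
Unset Printing Implicit Defensive.
Import Order.TTheory GRing.Theory Num.Theory.
Local Open Scope ring_scope.

Section AP.
Context {T : finType}.

Definition is_matching (M : {set {set T}}) : Prop :=
  (forall e, e \in M -> #|e| = 2%N) /\
  (forall e f, e \in M -> f \in M -> e != f -> [disjoint e & f]).

Definition disagree (Mt Mc : {set {set T}}) : {set {set T}} :=
  (Mt :|: Mc) :\: (Mt :&: Mc).

Definition edges (s : seq T) : seq {set T} :=
  if s is x :: s' then pairmap (fun a b => [set a; b]) x s' else [::].

Definition is_cycle (s : seq T) : bool :=
  if s is x :: s' then (s' != [::]) && (last x s' == x) else false.

Definition nedges (s : seq T) : nat := (size s).-1.

(** [cs] lists the connected components P_1, ..., P_m of the disagreement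
    graph, each as an alternating path or cycle (v_{i,1}, ..., v_{i,k(i)+1}). *)
Definition components_of (Mt Mc : {set {set T}}) (cs : seq (seq T)) : Prop :=
  [/\
      forall s, s \in cs -> (2 <= size s)%N /\
        (forall e, e \in edges s -> e \in disagree Mt Mc),
      forall s, s \in cs -> forall j, (j.+1 < nedges s)%N ->
        (nth set0 (edges s) j \in Mt) != (nth set0 (edges s) j.+1 \in Mt),
      forall s, s \in cs -> (if is_cycle s then uniq (behead s) else uniq s),
      forall i i', (i < size cs)%N -> (i' < size cs)%N -> i <> i' ->
        [disjoint (nth [::] cs i) & (nth [::] cs i')]
    &
      forall e, e \in disagree Mt Mc -> exists2 s, s \in cs & e \in edges s].

Context {R : realFieldType}.

(** One step of the chain: W_j given W_{j-1}. *)
Definition ap_step (p : R) (a b : bool) : R :=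
  if a then (if b then 0 else 1) else (if b then p else 1 - p).

(** Probability mass of the indicator vector w (0-based: w 0 = W_{i,1}, ...,
    w (k-1) = W_{i,k}) of one component with k edges under the Alternating Path
    Randomized Design; entries w j for j >= k are padding and must be false. *)
Definition comp_pmf (p : R) (k : nat) (cyc : bool) (w : nat -> bool) : R :=
  (if w 0%N then p / (1 + p) else 1 / (1 + p)) *
  (\prod_(1 <= j < (if cyc then k.-1 else k)) ap_step p (w j.-1) (w j)) *
  (if cyc then ((w k.-1) == (~~ w 0%N && ~~ w (k - 2)%N))%:R else 1) *
  (\prod_(k <= j < #|T|.+1) (~~ w j)%:R).

(** Sample space: one indicator per (component, edge index); edge indices are
    bounded by #|T| (components are simple paths/cycles), extra entries padded. *)
Definition Wspace (m : nat) := {ffun 'I_m -> {ffun 'I_(#|T|.+1) -> bool}}.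

Definition Wv {m : nat} (W : Wspace m) (i : 'I_m) (j : nat) : bool :=
  (j < #|T|.+1)%N && W i (inord j).

Definition comp (cs : seq (seq T)) (i : nat) : seq T := nth [::] cs i.
Definition edge (cs : seq (seq T)) (i j : nat) : {set T} :=
  nth set0 (edges (comp cs i)) j.

Definition design_prob (p : R) (cs : seq (seq T)) (W : Wspace (size cs)) : R :=
  \prod_(i < size cs)
     comp_pmf p (nedges (comp cs i)) (is_cycle (comp cs i)) (Wv W i).

Definition expect (p : R) (cs : seq (seq T)) (f : Wspace (size cs) -> R) : R :=
  \sum_(W : Wspace (size cs)) design_prob p cs W * f W.

Definition marg (p : R) (cs : seq (seq T)) (i : 'I_(size cs)) (j : nat) : R :=
  \sum_(W : Wspace (size cs) | Wv W i j) design_prob p cs W.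

Definition tau_AP (N : nat) (Mt Mc : {set {set T}}) (Y : {set T} -> R) (p : R)
    (cs : seq (seq T)) (W : Wspace (size cs)) : R :=
  N%:R^-1 * \sum_(i < size cs)
    ((\sum_(j < nedges (comp cs i) | edge cs i j \in disagree Mt Mc :&: Mt)
        (Wv W i j)%:R * Y (edge cs i j) / marg p cs i j) -
     (\sum_(j < nedges (comp cs i) | edge cs i j \in disagree Mt Mc :&: Mc)
        (Wv W i j)%:R * Y (edge cs i j) / marg p cs i j)).

Definition tau (N : nat) (Mt Mc : {set {set T}}) (Y : {set T} -> R) : R :=
  N%:R^-1 * (\sum_(e in Mt) Y e - \sum_(e in Mc) Y e).

End AP.

(* Main.v *)
Require Import Defs.
From HB Require Import structures.
From mathcomp Require Import all_boot all_order all_algebra.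
From Stdlib Require Import FunctionalExtensionality.
From mathcomp Require Import zify.
Import Order.TTheory GRing.Theory Num.Theory.
Local Open Scope ring_scope.



Lemma edges_cons2 (T : finType) (x y : T) t :
  edges [:: x, y & t] = [set x; y] :: edges (y :: t).
Proof. by []. Qed.

Lemma edges_sub (T : finType) (s : seq T) e x :
  e \in edges s -> x \in e -> x \in s.
Proof.
elim: s => [|a s IH] //; case: s IH => [|b t] IH //.
rewrite edges_cons2 inE => /orP[/eqP->|/IH H].
  by rewrite !inE => /orP[]->; rewrite ?orbT.
by move=> /H hx; rewrite inE hx orbT.
Qed.

Lemma uniq_edges_path (T : finType) (s : seq T) : uniq s -> uniq (edges s).
Proof.
elim: s => [|a s IH] //; case: s IH => [|b t] IH // /andP[ha hu].
rewrite edges_cons2 /= IH // andbT; apply/negP => H.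
by move: (@edges_sub T (b :: t) _ a H); rewrite !inE eqxx => /(_ isT) ha'; move: ha; rewrite inE ha'.
Qed.

Lemma size_edges (T : finType) (s : seq T) : size (edges s) = nedges s.
Proof. by case: s => [|x s] //=; rewrite size_pairmap. Qed.

Lemma uniq_edges_cycle (T : finType) (s : seq T) : is_cycle s -> uniq (behead s) ->
  (size s = 3%N -> nth set0 (edges s) 0 != nth set0 (edges s) 1) -> uniq (edges s).
Proof.
case: s => [|x [|y t]] //= /eqP hl hu h3.
case: t hl hu h3 => [|z t'] hl hu h3 //.
have hu' : uniq (y :: z :: t') := hu.
apply/andP; split; last exact (@uniq_edges_path T _ hu').
have xin : x \in z :: t' by rewrite -hl /= mem_last.
move: hu => /andP[yn hu2].
apply/negP; rewrite /= inE => /orP[/eqP E|H]; last first.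
  move: (@edges_sub T (z :: t') _ y H).
  by rewrite !inE eqxx orbT => /(_ isT) => yy; move: yn; rewrite inE yy.
have : x \in [set y; z] by rewrite -E !inE eqxx.
rewrite !inE => /orP[/eqP xy|/eqP xz].
  by rewrite -xy xin in yn.
case: t' hl xin hu2 h3 E hu' yn => [|w t''] hl xin hu2 h3 E hu' yn.
  by move: (h3 erefl); rewrite /= E eqxx.
move: hu2 => /andP[zn _].
have : last w t'' \in w :: t'' by apply: mem_last.
by rewrite /= in hl; rewrite hl xz (negbTE zn).
Qed.



Definition pat (k : nat) (cyc : bool) (j : nat) (l : nat) : bool :=
  (l == j) || [&& cyc, l == k.-1, j != 0%N & j != (k - 2)%N].

Lemma ap_step_ge0 (R : realFieldType) (p : R) a b : 0 < p < 1 -> 0 <= ap_step p a b.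
Proof.
move=> /andP[p0 p1]; rewrite /ap_step.
by case: a; case: b => //; rewrite ?subr_ge0 ltW.
Qed.

Lemma ap_step_gt0 (R : realFieldType) (p : R) a b : 0 < p < 1 -> ~~ (a && b) ->
  0 < ap_step p a b.
Proof.
move=> /andP[p0 p1]; rewrite /ap_step.
by case: a; case: b => //; rewrite ?subr_gt0.
Qed.

Lemma comp_pmf_ge0 (T : finType) (R : realFieldType) (p : R) k (cyc : bool) w : 0 < p < 1 ->
  0 <= @comp_pmf T R p k cyc w.
Proof.
move=> hp; have /andP[p0 p1] := hp.
rewrite /comp_pmf; apply: mulr_ge0; [apply: mulr_ge0; [apply: mulr_ge0|]|].
- by case: (w 0%N); apply: divr_ge0; rewrite ?ltW // addr_gt0.
- by apply: prodr_ge0 => i _; apply: ap_step_ge0.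
- by case: cyc => //; apply: ler0n.
- by apply: prodr_ge0 => i _; apply: ler0n.
Qed.

Lemma comp_pmf_gt0 (T : finType) (R : realFieldType) (p : R) k (cyc : bool) j : 0 < p < 1 ->
  (j < k)%N -> (cyc -> 2 <= k)%N ->
  0 < @comp_pmf T R p k cyc (pat k cyc j).
Proof.
move=> hp jk hc; have /andP[p0 p1] := hp.
rewrite /comp_pmf; apply: mulr_gt0; [apply: mulr_gt0; [apply: mulr_gt0|]|].
- by case: (pat _ _ _ 0%N); apply: divr_gt0; rewrite ?ltW // addr_gt0.
- rewrite big_seq; apply: prodr_gt0 => l; rewrite mem_index_iota => /andP[l1 lk].
  apply: ap_step_gt0 => //; rewrite /pat.
  case: cyc hc lk => hc lk /=.
    have e1 : (l.-1 == k.-1) = false by apply/negbTE; rewrite neq_ltn; apply/orP; left; lia.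
    have e2 : (l == k.-1) = false by apply/negbTE; rewrite neq_ltn; apply/orP; left; lia.
    rewrite e1 e2 /= !orbF; apply/negP => /andP[/eqP a /eqP b]; lia.
  rewrite !orbF; apply/negP => /andP[/eqP a /eqP b]; lia.
- case: cyc hc => hc //; rewrite ltr0n.
  move: (hc isT); clear hc; case: k jk => [|[|k']] // jk _.
  have h : (k' == k'.+1) = false by clear; elim: k'.
  rewrite /pat /= subn2 /= h /=.
  case: (eqVneq j k'.+1) => [->|ne] /=; first by rewrite h.
  by rewrite /= orbF (eq_sym 0%N) (eq_sym k') !orbF eqxx /= eqxx.
- rewrite big_seq; apply: prodr_gt0 => l; rewrite mem_index_iota => /andP[l1 lk].
  rewrite ltr0n lt0b /pat; apply/negP => /orP[/eqP a|/and4P[_ /eqP b _ _]]; lia.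
Qed.



Lemma disagree_card (T : finType) (Mt Mc : {set {set T}}) e :
  is_matching Mt -> is_matching Mc -> e \in disagree Mt Mc -> #|e| = 2%N.
Proof.
move=> [h1 _] [h2 _]; rewrite /disagree !inE => /andP[_ /orP[/h1|/h2]] //.
Qed.

Lemma comp_facts (T : finType) (Mt Mc : {set {set T}}) cs (i : nat) :
  is_matching Mt -> is_matching Mc -> components_of Mt Mc cs -> (i < size cs)%N ->
  [/\ (1 <= nedges (Defs.comp cs i))%N, (is_cycle (Defs.comp cs i) -> 2 <= nedges (Defs.comp cs i))%N,
      (nedges (Defs.comp cs i) <= #|T|)%N & uniq (edges (Defs.comp cs i))].
Proof.
move=> hMt hMc [c1 c2 c3 c4 c5] hi.
have sin : Defs.comp cs i \in cs by apply: mem_nth.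
move: (c1 _ sin) (c2 _ sin) (c3 _ sin) => [sz ed] alt un.
set s := Defs.comp cs i in sin sz ed alt un *.
split.
- by rewrite /nedges; case: (size s) sz => [|[|n]].
- case: s sz ed alt un {sin} => [|x [|y [|z t]]] //= sz ed alt un /eqP yx.
  have := ed [set x; y]; rewrite /= inE eqxx => /(_ isT) /(disagree_card _ _ _ _ hMt hMc).
  by rewrite cards2 yx eqxx.
- case: (is_cycle s) un => un.
    have := max_card (mem (behead s)); rewrite (card_uniqP un) size_behead.
    by rewrite /nedges.
  have := max_card (mem s); rewrite (card_uniqP un) /nedges.
  by case: (size s) => // n; apply: leq_trans; apply: leqnSn.
- case cy: (is_cycle s) un => un.
    apply: uniq_edges_cycle => // s3.
    have := alt 0%N; rewrite /nedges s3 => /(_ isT).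
    by apply: contra => /eqP ->.
  exact: uniq_edges_path.
Qed.



Lemma sum_nth_eq (R : realFieldType) (T : eqType) (l : seq T) x0 e : uniq l ->
  \sum_(j < size l) ((nth x0 l j == e)%:R : R) = (e \in l)%:R.
Proof.
elim: l => [|a l IH] /=; first by rewrite big_ord0.
move=> /andP[an u]; rewrite big_ord_recl /= IH // inE.
case: (eqVneq a e) => [<-|ne] /=; first by rewrite (negbTE an) addr0.
by rewrite add0r.
Qed.

Lemma count_edge (R : realFieldType) (T : finType) (Mt Mc : {set {set T}}) cs e :
  is_matching Mt -> is_matching Mc -> components_of Mt Mc cs -> e \in disagree Mt Mc ->
  \sum_(i < size cs) \sum_(j < nedges (Defs.comp cs i)) ((edge cs i j == e)%:R : R) = 1.
Proof.
move=> hMt hMc hc he; have [c1 c2 c3 c4 c5] := hc.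
have uq i : (i < size cs)%N -> uniq (edges (Defs.comp cs i)).
  by move=> hi; have [] := comp_facts _ _ _ _ i hMt hMc hc hi.
have inner (i : 'I_(size cs)) : \sum_(j < nedges (Defs.comp cs i)) ((edge cs i j == e)%:R : R)
    = (e \in edges (Defs.comp cs i))%:R.
  rewrite -size_edges; exact: sum_nth_eq (uq i (ltn_ord i)).
under eq_bigr do rewrite inner.
have [s sin es] := c5 e he.
have i0lt : (index s cs < size cs)%N by rewrite index_mem.
pose i0 : 'I_(size cs) := Ordinal i0lt.
have ci0 : Defs.comp cs i0 = s by rewrite /Defs.comp /= nth_index.
rewrite (bigD1 i0) //= ci0 es big1 ?addr0 // => i ne.
have : (0 < #|e|)%N by rewrite (disagree_card _ _ _ _ hMt hMc).
move=> /card_gt0P [x xe].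
case ei: (e \in edges (Defs.comp cs i)) => //.
have x1 := edges_sub _ _ _ _ ei xe.
have x2 := edges_sub _ _ _ _ es xe.
have := c4 i i0 (ltn_ord i) i0lt.
have neq : (i : nat) <> i0 by move=> /val_inj E; rewrite E eqxx in ne.
move=> /(_ neq) dj.
by move: (disjointFr dj x1); rewrite -/(Defs.comp cs i0) ci0 x2.
Qed.

Lemma pick_sum (R : realFieldType) (T : finType) (S : {set T}) (Y : T -> R) x :
  \sum_(e in S) Y e * (x == e)%:R = if x \in S then Y x else 0.
Proof.
rewrite big_mkcond (bigD1 x) //= big1 => [|e ne].
  by case: ifP => _; rewrite ?eqxx ?mulr1 addr0.
by case: ifP => _ //; rewrite eq_sym (negbTE ne) mulr0.
Qed.

Lemma comb (R : realFieldType) (T : finType) (Mt Mc : {set {set T}}) cs (Y : {set T} -> R) (S : {set {set T}}) :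
  is_matching Mt -> is_matching Mc -> components_of Mt Mc cs -> S \subset disagree Mt Mc ->
  \sum_(i < size cs) \sum_(j < nedges (Defs.comp cs i) | edge cs i j \in S) Y (edge cs i j)
  = \sum_(e in S) Y e.
Proof.
move=> hMt hMc hc hS.
transitivity (\sum_(e in S) Y e * \sum_(i < size cs)
   \sum_(j < nedges (Defs.comp cs i)) ((edge cs i j == e)%:R : R)); last first.
  apply: eq_bigr => e eS; rewrite (count_edge _ _ _ _ _ _ hMt hMc hc) ?mulr1 //.
  exact: (subsetP hS).
under [RHS]eq_bigr do rewrite mulr_sumr.
rewrite exchange_big; apply: eq_bigr => i _.
under [RHS]eq_bigr do rewrite mulr_sumr.
rewrite exchange_big big_mkcond; apply: eq_bigr => j _.
by rewrite pick_sum.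
Qed.



Lemma marg_gt0 (T : finType) (R : realFieldType) (Mt Mc : {set {set T}}) cs (p : R)
  (i : 'I_(size cs)) (j : nat) :
  is_matching Mt -> is_matching Mc -> components_of Mt Mc cs -> 0 < p < 1 ->
  (j < nedges (Defs.comp cs i))%N -> 0 < marg p cs i j.
Proof.
move=> hMt hMc hc hp hj.
pose J (i' : 'I_(size cs)) := if i' == i then j else 0%N.
pose W0 : Wspace (size cs) := [ffun i' : 'I_(size cs) => [ffun l : 'I_(#|T|.+1) =>
   pat (nedges (Defs.comp cs i')) (is_cycle (Defs.comp cs i')) (J i') l]].
have Jlt i' : (J i' < nedges (Defs.comp cs i'))%N.
  have [H1 _ _ _] := comp_facts _ _ _ _ _ hMt hMc hc (ltn_ord i').
  by rewrite /J; case: eqP => [->|].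
have JW i' : Wv W0 i' =1 pat (nedges (Defs.comp cs i')) (is_cycle (Defs.comp cs i')) (J i').
  move=> l; rewrite /Wv !ffunE.
  have [H1 H2 H3 _] := comp_facts _ _ _ _ _ hMt hMc hc (ltn_ord i').
  have := Jlt i'.
  case: (ltnP l #|T|.+1) => hl /= jl; first by rewrite inordK.
  symmetry; apply/negP; rewrite /pat => /orP[/eqP a|/and4P[_ /eqP b _ _]]; lia.
have W0in : Wv W0 i j by rewrite JW /J eqxx /pat eqxx.
have P0 : 0 < design_prob p cs W0.
  apply: prodr_gt0 => i' _; rewrite (functional_extensionality _ _ (JW i')).
  have [H1 H2 H3 _] := comp_facts _ _ _ _ _ hMt hMc hc (ltn_ord i').
  exact: comp_pmf_gt0.
rewrite /marg (bigD1 W0) //=; apply: ltr_wpDr => //.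
apply: sumr_ge0 => W _; apply: prodr_ge0 => i' _; exact: comp_pmf_ge0.
Qed.



Theorem proposition4 (T : finType) (R : realFieldType) (N : nat)
  (Mt Mc : {set {set T}}) (Y : {set T} -> R) (cs : seq (seq T)) (p : R) :
  #|T| = N.*2 ->
  is_matching Mt -> is_matching Mc ->
  components_of Mt Mc cs ->
  0 < p < 1 ->
  expect p cs (tau_AP N Mt Mc Y p cs) = tau N Mt Mc Y.
Proof.
move=> _ hMt hMc hc hp.
have expW (i : 'I_(size cs)) (j : nat) (e : {set T}) : (j < nedges (Defs.comp cs i))%N ->
  \sum_(W : Wspace (size cs)) design_prob p cs W * ((Wv W i j)%:R * Y e / marg p cs i j) = Y e.
  move=> hj; have m0 := @marg_gt0 T R Mt Mc cs p i j hMt hMc hc hp hj.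
  have -> : \sum_(W : Wspace (size cs)) design_prob p cs W * ((Wv W i j)%:R * Y e / marg p cs i j)
    = (\sum_(W : Wspace (size cs)) design_prob p cs W * (Wv W i j)%:R) * Y e / marg p cs i j.
    by rewrite !mulr_suml; apply: eq_bigr => W _; rewrite !mulrA.
  have -> : \sum_(W : Wspace (size cs)) design_prob p cs W * (Wv W i j)%:R = marg p cs i j.
    by rewrite /marg [RHS]big_mkcond; apply: eq_bigr => W _; case: (Wv W i j); rewrite ?mulr1 ?mulr0.
  by rewrite mulrAC divff ?mul1r // gt_eqF.
have key (i : 'I_(size cs)) (S : {set {set T}}) :
  \sum_(W : Wspace (size cs)) design_prob p cs W *
    (\sum_(j < nedges (Defs.comp cs i) | edge cs i j \in S)
        (Wv W i j)%:R * Y (edge cs i j) / marg p cs i j)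
  = \sum_(j < nedges (Defs.comp cs i) | edge cs i j \in S) Y (edge cs i j).
  under eq_bigr do rewrite mulr_sumr.
  by rewrite exchange_big; apply: eq_bigr => j _; apply: expW.
rewrite /expect /tau_AP /tau.
under eq_bigr do rewrite mulrCA.
rewrite -mulr_sumr; congr (_ * _).
under eq_bigr do rewrite mulr_sumr.
rewrite exchange_big /=.
transitivity (\sum_(i < size cs)
   ((\sum_(j < nedges (Defs.comp cs i) | edge cs i j \in disagree Mt Mc :&: Mt) Y (edge cs i j)) -
    (\sum_(j < nedges (Defs.comp cs i) | edge cs i j \in disagree Mt Mc :&: Mc) Y (edge cs i j)))).
  apply: eq_bigr => i _; rewrite -!key -sumrB; apply: eq_bigr => W _; by rewrite mulrBr.
rewrite sumrB !(comb _ _ _ _ _ _ _ hMt hMc hc) ?subsetIl //.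
rewrite (big_setID Mc (A := Mt)) (big_setID Mt (A := Mc)) /= [Mc :&: Mt]setIC.
have -> : disagree Mt Mc :&: Mt = Mt :\: Mc.
  by apply/setP => e; rewrite !inE; case: (e \in Mt); case: (e \in Mc).
have -> : disagree Mt Mc :&: Mc = Mc :\: Mt.
  by apply/setP => e; rewrite !inE; case: (e \in Mt); case: (e \in Mc).
by rewrite opprD addrACA subrr add0r.
Qed.
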